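(* Let $d\ge1$ and let $f:\{0,1\}^n\to\{0,1\}$ be a depth-$d$ decision tree with polynomial representation $f=M_1+M_2+\cdots+M_t$ over $\mathbb{F}_2$. Let $M_i=x_{i_1}\cdots x_{i_{d'}}$ (with $d'\le d$) be a maximal monomial of $f$. Then for all $\xi_1,\dots,\xi_{d'}\in\{0,1\}$, the function $f_{|x_{i_1}\gets\xi_1,\dots,x_{i_{d'}}\gets\xi_{d'}}$ is a depth-$(d-1)$ decision tree.
   Context: A decision tree over $x_1,\dots,x_n$ is a rooted binary tree whose internal nodes are labeled by variables, each having a 0-child and a 1-child, leaves labeled $0$ or $1$; it computes a Boolean function by following from the root the $x_i$-child at a node labeled $x_i$; a depth-$d$ decision tree is a function computed by such a tree with every root-to-leaf path having at most $d$ edges. Every Boolean function has a unique representation as a sum over $\mathbb{F}_2$ of distinct monomials (products of distinct variables; the empty product is the constant $1$). A monomial $M_i$ of $f$ is maximal if no other monomial $M_j$ of $f$ contains all variables of $M_i$. $f_{|x_{i_1}\gets\xi_1,\dots}$ denotes the function obtained by substituting $x_{i_r}=\xi_r$. *)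

(* Defs.v *)
From mathcomp Require Import all_boot.
Set Implicit Arguments. Unset Strict Implicit. Unset Printing Implicit Defensive.

Definition boolfun (n : nat) := ('I_n -> bool) -> bool.

Inductive dtree (n : nat) : Type :=
| DLeaf of bool
| DNode of 'I_n & dtree n & dtree n.

Fixpoint dt_eval n (T : dtree n) (x : 'I_n -> bool) : bool :=
  match T with
  | DLeaf b => b
  | DNode i T0 T1 => if x i then dt_eval T1 x else dt_eval T0 x
  end.

Fixpoint dt_depth n (T : dtree n) : nat :=
  match T with
  | DLeaf _ => 0
  | DNode _ T0 T1 => (maxn (dt_depth T0) (dt_depth T1)).+1
  end.

Definition is_depth_dt n (d : nat) (f : boolfun n) : Prop :=
  exists T : dtree n, dt_depth T <= d /\ forall x, dt_eval T x = f x.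

Definition monomial n (S : {set 'I_n}) (x : 'I_n -> bool) : bool :=
  [forall i in S, x i].

(* F (a set of distinct monomials) is the F_2 polynomial representation
   of f: f = sum over F of the monomials, sum taken in F_2 (xor). *)
Definition anf_rep n (F : {set {set 'I_n}}) (f : boolfun n) : Prop :=
  forall x, f x = \big[addb/false]_(S in F) monomial S x.

Definition maximal_monomial n (F : {set {set 'I_n}}) (M : {set 'I_n}) : Prop :=
  M \in F /\ forall S, S \in F -> M \subset S -> S = M.

Definition restrict n (f : boolfun n) (M : {set 'I_n}) (xi : 'I_n -> bool)
  : boolfun n :=
  fun x => f (fun i => if i \in M then xi i else x i).

(* Main.v *)
Require Import Defs.
From mathcomp Require Import all_boot.
Set Implicit Arguments. Unset Strict Implicit. Unset Printing Implicit Defensive.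

Lemma xor_odd (I : finType) (P : pred I) (b : I -> bool) :
  \big[addb/false]_(i in P) b i = odd #|[set i | P i && b i]|.
Proof.
rewrite -sum1dep_card.
have -> : \sum_(x | P x && b x) 1 = \sum_(x in P) (b x : nat).
  rewrite big_mkcondr /=; apply: eq_bigr => i _; by case: (b i).
rewrite (big_morph odd (id1:=false) (id2:=0) oddD erefl).
by apply: eq_bigr => i _; rewrite oddb.
Qed.

Lemma count_super n (S M : {set 'I_n}) :
  odd #|[set A | (A \in powerset M) && (S \subset A)]| = (S == M).
Proof.
case: (boolP (S \subset M)) => SM; last first.
  have -> : [set A | (A \in powerset M) && (S \subset A)] = set0.
    apply/setP => A; rewrite !inE ?powersetE.
    apply/negP => /andP[AM SA]; by rewrite (subset_trans SA AM) in SM.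
  rewrite cards0 /=; apply/esym/negP => /eqP E; by rewrite E subxx in SM.
have -> : [set A | (A \in powerset M) && (S \subset A)] =
          [set B :|: S | B in powerset (M :\: S)].
  apply/setP => A; rewrite !inE ?powersetE; apply/andP/imsetP.
    move=> [AM SA]; exists (A :\: S); first by rewrite powersetE setSD.
    apply/setP => i; rewrite !inE; case iS: (i \in S);
      rewrite ?orbT ?orbF ?andbT ?andbF //.
    by rewrite (subsetP SA).
  move=> [B]; rewrite powersetE => BMS ->; split.
    by rewrite subUset SM (subset_trans BMS) // subsetDl.
  by rewrite subsetUr.
rewrite card_in_imset ?card_powerset.
  rewrite oddX orbF cards_eq0 setD_eq0 eqEsubset SM //.
move=> B1 B2; rewrite !powersetE => /subsetP H1 /subsetP H2 E.
apply/setP => i; move/setP: E => /(_ i); rewrite !inE.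
case iS: (i \in S); last by rewrite !orbF.
move=> _; case iB1: (i \in B1); first by move: (H1 _ iB1); rewrite inE iS.
case iB2: (i \in B2) => //; by move: (H2 _ iB2); rewrite inE iS.
Qed.

Lemma mon_sub n (S A : {set 'I_n}) : monomial S (fun i => i \in A) = (S \subset A).
Proof. by apply/forallP/subsetP => H i; [move=> iS; exact: (implyP (H i)) | apply/implyP; exact: H]. Qed.

Lemma mobius n (G : {set {set 'I_n}}) g :
  (forall x, g x = \big[addb/false]_(S in G) monomial S x) -> forall M,
  \big[addb/false]_(A in powerset M) g (fun i => i \in A) = (M \in G).
Proof.
move=> Hg M.
under eq_bigr do rewrite Hg.
rewrite exchange_big /=.
under eq_bigr do under eq_bigr do rewrite mon_sub.
under eq_bigr do rewrite xor_odd count_super.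
case MG: (M \in G).
  rewrite (bigD1 M) //= ?eqxx big1 // => S /andP[_ /negbTE ->] //.
rewrite big1 // => S SG; apply/negbTE/eqP => E; by rewrite -E SG in MG.
Qed.

Lemma const_rep n (G : {set {set 'I_n}}) g b M :
  (forall x, g x = \big[addb/false]_(S in G) monomial S x) ->
  (forall x, g x = b) -> M \in G -> b.
Proof.
move=> Hg Hb MG; have := mobius Hg M; rewrite MG.
case: b Hb => // Hb; under eq_bigr do rewrite Hb.
by rewrite big1.
Qed.

Definition res n (M : {set 'I_n}) (xi : 'I_n -> bool) (x : 'I_n -> bool) :=
  fun i => if i \in M then xi i else x i.

Fixpoint rt n (M : {set 'I_n}) (xi : 'I_n -> bool) (T : dtree n) : dtree n :=
  match T with
  | DLeaf b => DLeaf n b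
  | DNode i T0 T1 => if i \in M then (if xi i then rt M xi T1 else rt M xi T0)
                     else DNode i (rt M xi T0) (rt M xi T1)
  end.

Lemma eval_ext n (T : dtree n) x y : (forall i, x i = y i) -> dt_eval T x = dt_eval T y.
Proof. move=> E; elim: T => //= i T0 IH0 T1 IH1; by rewrite E IH0 IH1. Qed.

Lemma rt_eval n M xi (T : dtree n) x : dt_eval (rt M xi T) x = dt_eval T (res M xi x).
Proof.
elim: T => //= i T0 IH0 T1 IH1; rewrite /res; case: (i \in M) => //=.
  by case: (xi i).
by rewrite IH0 IH1.
Qed.

Lemma rt_depth n M xi (T : dtree n) : dt_depth (rt M xi T) <= dt_depth T.
Proof.
elim: T => //= i T0 IH0 T1 IH1; case: (i \in M) => /=.
  case: (xi i); apply: leqW.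
    exact: leq_trans IH1 (leq_maxr _ _).
  exact: leq_trans IH0 (leq_maxl _ _).
rewrite ltnS geq_max; apply/andP; split.
  exact: leq_trans IH0 (leq_maxl _ _).
exact: leq_trans IH1 (leq_maxr _ _).
Qed.

Lemma depth0_const n (T : dtree n) x y : dt_depth T <= 0 -> dt_eval T x = dt_eval T y.
Proof. by case: T. Qed.

Lemma res_id n j b (x : 'I_n -> bool) : x j = b -> forall i, res [set j] (fun _ => b) x i = x i.
Proof. move=> xb i; rewrite /res inE; case: eqP => // ->; by rewrite xb. Qed.

Lemma split_eval n j (T0 T1 : dtree n) z :
  dt_eval (DNode j T0 T1) z =
  if z j then dt_eval (rt [set j] (fun _ => true) T1) z
  else dt_eval (rt [set j] (fun _ => false) T0) z.
Proof.
rewrite /= !rt_eval; case zj: (z j); apply: eval_ext => i; symmetry; exact: res_id.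
Qed.

Lemma eval_res0 n j (T0 T1 : dtree n) x :
  dt_eval (rt [set j] (fun _ => false) T0) x =
  dt_eval (DNode j T0 T1) (res [set j] (fun _ => false) x).
Proof. by rewrite rt_eval /= /res inE eqxx. Qed.

Lemma eval_res1 n j (T0 T1 : dtree n) x :
  dt_eval (rt [set j] (fun _ => true) T1) x =
  dt_eval (DNode j T0 T1) (res [set j] (fun _ => true) x).
Proof. by rewrite rt_eval /= /res inE eqxx. Qed.

Lemma mon_res0 n j (S : {set 'I_n}) x :
  monomial S (res [set j] (fun _ => false) x) = (j \notin S) && monomial S x.
Proof.
rewrite /monomial /res; case jS: (j \in S) => /=.
  apply/negbTE/forallP => /(_ j); by rewrite jS inE eqxx.
apply: eq_forallb => i; rewrite inE; case: eqP => // ->; by rewrite jS.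
Qed.

Lemma mon_res1 n j (S : {set 'I_n}) x :
  monomial S (res [set j] (fun _ => true) x) = monomial (S :\ j) x.
Proof.
rewrite /monomial /res; apply: eq_forallb => i; rewrite !inE.
by case: eqP => //= _; case: (i \in S).
Qed.

Lemma xor_symdiff (T : finType) (A B : {set T}) (m : T -> bool) :
  \big[addb/false]_(S in A) m S (+) \big[addb/false]_(S in B) m S =
  \big[addb/false]_(S in [set S | (S \in A) (+) (S \in B)]) m S.
Proof.
rewrite !(big_mkcond (fun S => S \in _)) -big_split; apply: eq_bigr => S _.
by rewrite inE; case: (S \in A); case: (S \in B); case: (m S).
Qed.

Definition rep n (F : {set {set 'I_n}}) (g : ('I_n -> bool) -> bool) :=
  forall x, g x = \big[addb/false]_(S in F) monomial S x.

Lemma setD1_id n (S : {set 'I_n}) j : j \notin S -> S :\ j = S.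
Proof.
move=> jS; apply/setP => i; rewrite !inE; case: eqP => // ->; by rewrite (negbTE jS).
Qed.

Lemma key k : forall n (T : dtree n) F M, dt_depth T <= k ->
  rep F (dt_eval T) -> maximal_monomial F M -> forall xi,
  exists T', dt_depth T' <= k.-1 /\ forall x, dt_eval T' x = dt_eval T (res M xi x).
Proof.
elim: k => [|k IH] n T F M dT HF [MF Mmax] xi.
  exists (rt M xi T); split; last exact: rt_eval.
  exact: leq_trans (rt_depth _ _ _) dT.
case: T dT HF => [b|j T0 T1] dT HF.
  by exists (DLeaf n b).
case jM: (j \in M).
  exists (rt M xi (DNode j T0 T1)); split; last exact: rt_eval.
  rewrite /= jM; move: dT; rewrite /= ltnS geq_max => /andP[d0 d1].
  by case: (xi j); [exact: leq_trans (rt_depth _ _ _) d1 | exact: leq_trans (rt_depth _ _ _) d0].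
move: (dT); rewrite /= ltnS geq_max => /andP[d0 d1].
set U0 := rt [set j] (fun _ => false) T0.
set U1 := rt [set j] (fun _ => true) T1.
have dU0 : dt_depth U0 <= k by exact: leq_trans (rt_depth _ _ _) d0.
have dU1 : dt_depth U1 <= k by exact: leq_trans (rt_depth _ _ _) d1.
set F0 := [set S in F | j \notin S].
set F1 := [set S :\ j | S in [set S in F | j \in S]].
set G1 := [set S | (S \in F0) (+) (S \in F1)].
have R0 : rep F0 (dt_eval U0).
  move=> x; rewrite /U0 (@eval_res0 _ j T0 T1) HF.
  under eq_bigr do rewrite mon_res0.
  rewrite !(big_mkcond (fun S => S \in _)); apply: eq_bigr => S _.
  by rewrite inE; case: (S \in F); case: (j \in S).
have R1 : rep G1 (dt_eval U1).
  move=> x; rewrite /U1 (@eval_res1 _ j T0 T1) HF -xor_symdiff.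
  under eq_bigr do rewrite mon_res1.
  rewrite /F1 big_imset /=; last first.
    move=> S1 S2; rewrite !inE => /andP[_ j1] /andP[_ j2] E.
    by rewrite -(setD1K j1) -(setD1K j2) E.
  rewrite !(big_mkcond (fun S => S \in _)) -big_split; apply: eq_bigr => S _.
  rewrite !inE; case: (S \in F); case jS: (j \in S) => //=.
  by rewrite addbF setD1_id ?jS.
have jnM : j \notin M by rewrite jM.
have MF0 : M \in F0 by rewrite inE MF jnM.
have MF1 : M \notin F1.
  apply/imsetP => [[S]]; rewrite inE => /andP[SF jS] EM.
  have MS : M \subset S by rewrite EM subD1set.
  by move: jnM; rewrite -(Mmax S SF MS) jS.
have max0 : maximal_monomial F0 M.
  split => // S; rewrite inE => /andP[SF _]; exact: Mmax.
have max1 : maximal_monomial G1 M.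
  split; first by rewrite inE MF0 (negbTE MF1).
  move=> S; rewrite inE; case SF0: (S \in F0) => /=.
    by move: SF0; rewrite inE => /andP[SF _] _; exact: Mmax.
  move=> SF1 MS; move/imsetP: SF1 => [S' ]; rewrite inE => /andP[SF jS] ES.
  have MS' : M \subset S' by rewrite (subset_trans MS) // ES subD1set.
  by move: jnM; rewrite -(Mmax S' SF MS') jS.
have Hsplit : forall z, dt_eval (DNode j T0 T1) z =
    if z j then dt_eval U1 z else dt_eval U0 z by move=> z; exact: split_eval.
have resj : forall x, res M xi x j = x j by move=> x; rewrite /res jM.
case: k IH dT d0 d1 dU0 dU1 => [|k] IH dT d0 d1 dU0 dU1.
  have c0 : forall x, dt_eval U0 x = true.
    move=> x; have Hc : forall y, dt_eval U0 y = dt_eval U0 x.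
      by move=> y; exact: depth0_const.
    exact: const_rep R0 Hc MF0.
  have c1 : forall x, dt_eval U1 x = true.
    move=> x; have Hc : forall y, dt_eval U1 y = dt_eval U1 x.
      by move=> y; exact: depth0_const.
    exact: const_rep R1 Hc (proj1 max1).
  exists (DLeaf n true); split => // x; move: (Hsplit (res M xi x)) => /= ->; rewrite c0 c1; by case: ifP.
have [V0 [dV0 HV0]] := IH _ _ _ _ dU0 R0 max0 xi.
have [V1 [dV1 HV1]] := IH _ _ _ _ dU1 R1 max1 xi.
exists (DNode j V0 V1); split.
  by rewrite /= ltnS geq_max dV0 dV1.
by move=> x; move: (Hsplit (res M xi x)) => /= ->; rewrite resj /= HV0 HV1.
Qed.

Theorem mainTheorem14 (n d : nat) (f : boolfun n)
    (F : {set {set 'I_n}}) (M : {set 'I_n}) :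
  1 <= d ->
  is_depth_dt d f ->
  anf_rep F f ->
  maximal_monomial F M ->
  forall xi : 'I_n -> bool, is_depth_dt d.-1 (restrict f M xi).
Proof.
move=> _ [T [dT HT]] HF HM xi.
have R : rep F (dt_eval T) by move=> x; rewrite HT HF.
have [T' [dT' H']] := key dT R HM xi.
exists T'; split => // x; by rewrite H' HT.
Qed.
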